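(* Let $A$ be an entrywise non-negative $d\times d$ matrix with $\rho(A)<1$, let $M=(I-A^T)(I-A)$, and let $\mu$ be the smallest eigenvalue of $M$. Then $\mu>0$ and $M$ has an entrywise non-negative eigenvector $\mathbf v$ with $\|\mathbf v\|=1$ associated with $\mu$. Moreover, with $r=\sqrt\mu$, the vector $\mathbf u=\frac1r(I-A)\mathbf v$ and the matrix $X=A+r\,\mathbf u\,\mathbf v^T$ are both entrywise non-negative, $\rho(X)\ge 1$, $\|X-A\|=r$, and for every real $d\times d$ matrix $Y$ with $\rho(Y)\ge 1$ one has $\|Y-A\|\ge r$. In other words, $X$ is a closest matrix to $A$ (among all real matrices) with spectral radius at least one, and it is non-negative.
   Context: $\rho(\cdot)$ denotes the spectral radius. For matrices, $\|X\|=\sqrt{\operatorname{tr}(X^TX)}=\sqrt{\sum_{i,j}x_{ij}^2}$ is the Frobenius norm; for vectors, $\|\cdot\|$ is the Euclidean norm. Inequalities between vectors or matrices are entrywise. *)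

(* Defs.v *)
(* Real matrices are modelled as matrices over a numeric
   closed field C (e.g. algC, the complex numbers) all of whose entries are real;
   eigenvalues are taken in C, as for the complex spectrum of a real matrix. *)
From HB Require Import structures.
From mathcomp Require Import all_boot all_order all_algebra.
Set Implicit Arguments. Unset Strict Implicit. Unset Printing Implicit Defensive.
Import Order.TTheory GRing.Theory Num.Theory.
Local Open Scope ring_scope.

Section Defs.
Variable C : numClosedFieldType.

Definition real_entries_mx m n (X : 'M[C]_(m, n)) : Prop :=
  forall i j, X i j \is Num.real.

Definition nonnegmx m n (X : 'M[C]_(m, n)) : Prop :=
  forall i j, 0 <= X i j.

Definition frob m n (X : 'M[C]_(m, n)) : C :=
  sqrtC (\sum_(i < m) \sum_(j < n) X i j ^+ 2).

Definition spec_rad_lt d (X : 'M[C]_d) (c : C) : Prop :=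
  forall l, eigenvalue X l -> `|l| < c.

Definition spec_rad_ge d (X : 'M[C]_d) (c : C) : Prop :=
  exists l, eigenvalue X l /\ c <= `|l|.

Definition smallest_eigenvalue d (X : 'M[C]_d) (mu : C) : Prop :=
  eigenvalue X mu /\ forall l, eigenvalue X l -> mu <= l.

End Defs.

(* Main.v *)
Require Import Defs.
From HB Require Import structures.
From mathcomp Require Import all_boot all_order all_algebra.
From mathcomp Require Import ring.

Module PFHelpers.
Import Order.TTheory GRing.Theory Num.Theory Num.Def.
Local Open Scope ring_scope.
Set Implicit Arguments. Unset Strict Implicit. Unset Printing Implicit Defensive.


Section PF.
Variable C : numClosedFieldType.


Lemma XsubC_neq0 (z : C) : 'X - z%:P != 0.
Proof. by rewrite polyXsubC_eq0. Qed.

Definition preal (p : {poly C}) := map_poly conjC p = p.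

Lemma preal_horner p t : preal p -> t \is Num.real -> p.[t] \is Num.real.
Proof.
move=> hp ht; apply/CrealP.
by rewrite -horner_map hp /= conj_Creal.
Qed.

Lemma pos_monic (p : {poly C}) (t : C) : t \is Num.real -> p \is monic ->
  preal p -> (forall z, root p z -> z \is Num.real -> z < t) -> 0 < p.[t].
Proof.
move=> ht; have [n] := ubnP (size p); elim: n p => // n IH p.
rewrite ltnS => sp pm pr hr.
have p0 : p != 0 by apply: monic_neq0.
have [/eqP s1|] := eqVneq (size p) 1%N.
  have := pm; rewrite monicE => /eqP l1.
  have /size_poly1P [c c0 pc] : size p == 1%N by rewrite s1.
  by move: l1; rewrite pc lead_coefC => ->; rewrite hornerC ltr01.
move=> /closed_rootP [z rz].
have [/factor_theorem [q pq]] := (rz, rz).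
have q0 : q != 0 by apply: contra_neq p0 => q0; rewrite pq q0 mul0r.
have sq : (size q < n)%N.
  apply: leq_trans sp; rewrite pq size_mul ?XsubC_neq0 // size_XsubC addn2 /=.
  by [].
have qm : q \is monic by move: pm; rewrite pq monicMr ?monicXsubC.
have [zr|znr] := boolP (z \is Num.real).
  have qr : preal q.
    apply: (mulIf (XsubC_neq0 z)); move: pr; rewrite /preal pq.
    by rewrite rmorphM /= rmorphB /= map_polyX map_polyC /= (conj_Creal zr).
  rewrite pq hornerM hornerXsubC mulr_gt0 ?subr_gt0 ?hr //.
  apply: IH => // y ry yr; apply: hr => //; by rewrite pq rootM ry.
have zc : root q z^*.
  have : root p z^*.
    by rewrite /root -pr horner_map (eqP rz) rmorph0.
  rewrite pq rootM root_XsubC => /orP [//|/eqP zz].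
  by move: znr; rewrite CrealE zz eqxx.
have [/factor_theorem [q2 qq2]] := (zc, zc).
have q20 : q2 != 0 by apply: contra_neq q0 => q0; rewrite qq2 q0 mul0r.
have sq2 : (size q2 < n)%N.
  apply: leq_trans sq; rewrite qq2 size_mul ?XsubC_neq0 // size_XsubC addn2 /=.
  by [].
have q2m : q2 \is monic by move: qm; rewrite qq2 monicMr ?monicXsubC.
set Q := ('X - z^*%:P) * ('X - z%:P).
have pQ : p = q2 * Q by rewrite pq qq2 /Q mulrA.
have Q0 : Q != 0 by rewrite mulf_neq0 ?XsubC_neq0.
have q2r : preal q2.
  have QQ : map_poly conjC Q = Q.
    rewrite /Q !rmorphM /= !rmorphB /= !map_polyX !map_polyC /= conjCK.
    by rewrite mulrC.
  apply: (mulIf Q0); move: pr; rewrite /preal pQ rmorphM /= QQ => ->.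
  done.
rewrite pQ hornerM /Q hornerM !hornerXsubC.
have -> : t - z^* = (t - z)^*.
  by rewrite rmorphB /= (conj_Creal ht).
rewrite mulr_gt0 // ?(mulrC (_^*)) ?mul_conjC_gt0 ?subr_eq0.
  apply: IH => // y ry yr; apply: hr => //; by rewrite pQ rootM ry.
by apply: contraNneq znr => <-.
Qed.



Lemma approx_eq0 (w : C) : (forall e : C, 0 < e -> `|w| <= e) -> w = 0.
Proof.
move=> h; apply/eqP; apply/negPn/negP => w0.
have hw : 0 < `|w| / 2 by rewrite divr_gt0 ?normr_gt0.
have lt : `|w| / 2 < `|w|.
  by rewrite ltr_pdivrMr ?ltr0n // ltr_pMr ?normr_gt0 // ltr1n.
by have := h _ hw; rewrite lt_geF.
Qed.

Lemma approx_ge0 (z : C) :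
  (forall e : C, 0 < e -> exists y, 0 <= y /\ `|z - y| <= e) -> 0 <= z.
Proof.
move=> h; suff: `|z| - z = 0 by move/eqP; rewrite subr_eq0 => /eqP <-.
apply: approx_eq0 => e e0.
have e20 : 0 < e / 2 by rewrite divr_gt0 ?ltr0n.
have [y [y0 hy]] := h _ e20.
have -> : `|z| - z = (`|z| - `|y|) + (y - z) by rewrite (ger0_norm y0) addrA subrK.
apply: le_trans (ler_normD _ _) _.
rewrite {1}(splitr e); apply: lerD.
  exact: le_trans (ler_dist_dist _ _) hy.
by rewrite distrC.
Qed.

Lemma poly_bound (q : {poly C}) (s : C) :
  exists H, 0 < H /\ forall u, `|u - s| <= 1 -> `|q.[u]| <= H.
Proof.
exists (1 + \sum_(i < size q) `|q`_i| * (`|s| + 1) ^+ i); split.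
  by rewrite ltr_pwDl ?ltr01 // sumr_ge0 // => i _; rewrite mulr_ge0 ?exprn_ge0 ?addr_ge0.
move=> u hu; rewrite horner_coef.
have h1 := ler_norm_sum (index_enum 'I_(size q)) (fun i : 'I_(size q) => q`_i * u ^+ i) xpredT.
apply: le_trans h1 _.
apply: le_trans (_ : _ <= \sum_(i < size q) `|q`_i| * (`|s| + 1) ^+ i) _; last first.
  by rewrite lerDr ler01.
apply: ler_sum => i _.
rewrite normrM normrX ler_wpM2l // lerXn2r ?nnegrE ?addr_ge0 //.
have -> : u = s + (u - s) by rewrite addrC subrK.
by apply: le_trans (ler_normD _ _) _; rewrite lerD2l.
Qed.

Lemma cont_ge0 (p : {poly C}) (s : C) : s \is Num.real ->
  (forall u, u \is Num.real -> s < u -> u < s + 1 -> 0 <= p.[u]) -> 0 <= p.[s].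
Proof.
move=> sr h.
have : root (p - p.[s]%:P) s by rewrite /root hornerD hornerN hornerC subrr.
move=> /factor_theorem [q hq].
have hp u : p.[u] = p.[s] + q.[u] * (u - s).
  have := congr1 (horner^~ u) hq; rewrite hornerD hornerN hornerC hornerM hornerXsubC.
  by move=> <-; rewrite addrC subrK.
have [H [H0 hH]] := poly_bound q s.
apply: approx_ge0 => e e0.
set d := e / (H + e).
have He0 : 0 < H + e by rewrite addr_gt0.
have d0 : 0 < d by rewrite divr_gt0.
have d1 : d < 1 by rewrite /d ltr_pdivrMr // mul1r ltr_pwDl.
have dH : d * H <= e.
  by rewrite /d mulrAC ler_pdivrMr // (ler_pM2l e0) lerDl ltW.
exists p.[s + d]; split.
  apply: h; first exact: rpredD sr (gtr0_real d0).
    by rewrite ltrDl.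
  by rewrite ltrD2l.
rewrite (hp (s+d)) opprD addrA subrr add0r normrN (addrC s d) addrK.
rewrite normrM (gtr0_norm d0).
rewrite mulrC; apply: le_trans dH; apply: ler_wpM2l; first exact: ltW.
by apply: hH; rewrite addrK gtr0_norm // ltW.
Qed.

Lemma cont_eq0 (p : {poly C}) (s : C) : s \is Num.real ->
  (forall u, u \is Num.real -> s < u -> u < s + 1 -> p.[u] = 0) -> p.[s] = 0.
Proof.
move=> sr h; apply/eqP; rewrite eq_le; apply/andP; split; last first.
  by apply: cont_ge0 => // u ur h1 h2; rewrite h.
rewrite -oppr_ge0 -hornerN; apply: cont_ge0 => // u ur h1 h2.
by rewrite hornerN h // oppr0.
Qed.



Lemma ev_char_poly_mx n (A : 'M[C]_n) u :
  map_mx (horner_eval u) (char_poly_mx A) = u%:M - A.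
Proof.
apply/matrixP => i j; rewrite !mxE horner_evalE hornerD hornerN hornerC.
by rewrite hornerMn hornerX.
Qed.

Lemma char_poly_horner n (A : 'M[C]_n) u : (char_poly A).[u] = \det (u%:M - A).
Proof. by rewrite -ev_char_poly_mx det_map_mx. Qed.

Lemma adj_horner n (A : 'M[C]_n) u i j :
  (\adj (char_poly_mx A) i j).[u] = \adj (u%:M - A) i j.
Proof. rewrite -ev_char_poly_mx -map_mx_adj. rewrite [RHS]mxE. by []. Qed.

Lemma bord n (M : 'M[C]_(1 + n)) : \det (drsubmx M) != 0 ->
  \det M = ulsubmx M 0 0 * \det (drsubmx M)
           - (ursubmx M *m \adj (drsubmx M) *m dlsubmx M) 0 0.
Proof.
move=> D0.
set a := ulsubmx M; set b := ursubmx M; set c := dlsubmx M; set D := drsubmx M.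
have Du : D \in unitmx by rewrite unitmxE unitfE.
have fac : M = block_mx 1%:M (b *m invmx D) 0 1%:M *m
               block_mx (a - b *m invmx D *m c) 0 c D.
  rewrite mulmx_block !mul1mx !mul0mx !add0r mulmxKV //.
  by rewrite subrK submxK.
rewrite {1}fac det_mulmx det_ublock det_lblock !det1 !mul1r det_mx11.
have -> : (a - b *m invmx D *m c) 0 0 =
   a 0 0 - (\det D)^-1 * (b *m \adj D *m c) 0 0.
  by rewrite mxE mxE /invmx Du -scalemxAr -scalemxAl !mxE.
by rewrite mulrC mulrBr mulrA mulfV // mul1r mulrC.
Qed.


End PF.


Section PF2.
Variable C : numClosedFieldType.

Lemma nonneg_mul m n p (X : 'M[C]_(m, n)) (Y : 'M[C]_(n, p)) :
  nonnegmx X -> nonnegmx Y -> nonnegmx (X *m Y).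
Proof.
move=> hX hY i j; rewrite mxE; apply: sumr_ge0 => k _; exact: mulr_ge0.
Qed.

Lemma nonneg_add m n (X Y : 'M[C]_(m, n)) :
  nonnegmx X -> nonnegmx Y -> nonnegmx (X + Y).
Proof. by move=> hX hY i j; rewrite mxE addr_ge0. Qed.

Lemma nonneg_scale m n (k : C) (X : 'M[C]_(m, n)) :
  0 <= k -> nonnegmx X -> nonnegmx (k *: X).
Proof. by move=> hk hX i j; rewrite mxE mulr_ge0. Qed.

Lemma nonneg_real m n (X : 'M[C]_(m, n)) : nonnegmx X -> map_mx conjC X = X.
Proof. by move=> hX; apply/matrixP => i j; rewrite mxE conj_Creal // ger0_real. Qed.

Definition nosing n (A : 'M[C]_n) t := t \is Num.real /\
  forall u, u \is Num.real -> t <= u -> \det (u%:M - A) != 0.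

Definition Lprop n (A : 'M[C]_n) t := forall p (x : 'M[C]_(n, p)),
  nonnegmx ((t%:M - A) *m x) -> nonnegmx x.

Lemma nosing_pos n (A : 'M[C]_n) t : nonnegmx A -> nosing A t ->
  0 < \det (t%:M - A).
Proof.
move=> A0 [tr hA]; rewrite -char_poly_horner; apply: pos_monic => //.
  exact: char_poly_monic.
  by rewrite /preal map_char_poly /= nonneg_real.
move=> z rz zr; rewrite real_ltNge //; apply/negP => tz.
by move: (hA z zr tz); rewrite -char_poly_horner (eqP rz) eqxx.
Qed.

Lemma adj_nonneg n (A : 'M[C]_n) t : Lprop A t -> 0 <= \det (t%:M - A) ->
  nonnegmx (\adj (t%:M - A)).
Proof.
move=> L d0; apply: L => i j; rewrite mul_mx_adj mxE; exact: mulrn_wge0.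
Qed.

Lemma seq_max (r : seq C) (P : pred C) :
  (exists2 z, z \in r & P z) -> {in r, forall z, P z -> z \is Num.real} ->
  exists2 m, m \in r & P m /\ forall z, z \in r -> P z -> z <= m.
Proof.
elim: r => [[z]//|a r IH] [z zin Pz] hr.
have hr' : {in r, forall z, P z -> z \is Num.real}.
  by move=> w wr; apply: hr; rewrite inE wr orbT.
have [Pa|nPa] := boolP (P a); last first.
  have [w wr Pw] : exists2 w, w \in r & P w.
    by move: zin; rewrite inE => /orP [/eqP zz|zr]; [by move: nPa; rewrite -zz Pz | exists z].
  have [m mr [Pm hm]] := IH (ex_intro2 _ _ w wr Pw) hr'.
  exists m; first by rewrite inE mr orbT.
  split => // y; rewrite inE => /orP [/eqP ->|yr]; [by rewrite (negbTE nPa)|exact: hm].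
have ar : a \is Num.real by apply: hr; rewrite ?inE ?eqxx.
have [hP|/hasPn hn] := boolP (has P r).
  have [w wr Pw] := hasP hP.
  have [m mr [Pm hm]] := IH (ex_intro2 _ _ w wr Pw) hr'.
  have mr' : m \is Num.real by apply: hr'.
  have [am|ma] := real_leP ar mr'.
    exists m; first by rewrite inE mr orbT.
    by split => // y; rewrite inE => /orP [/eqP ->|yr] //; apply: hm.
  exists a; first by rewrite inE eqxx.
  split => // y; rewrite inE => /orP [/eqP ->|yr] Py //.
  exact: le_trans (hm y yr Py) (ltW ma).
exists a; first by rewrite inE eqxx.
split => // y; rewrite inE => /orP [/eqP ->|yr] Py //.
by move: (hn y yr); rewrite Py.
Qed.

End PF2.


Section PF3.
Variable C : numClosedFieldType.

Lemma blocks_sub n (A : 'M[C]_(1 + n)) u :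
  u%:M - A = block_mx (u%:M - ulsubmx A) (- ursubmx A) (- dlsubmx A) (u%:M - drsubmx A).
Proof.
by rewrite -{1}[A]submxK (scalar_mx_block 1 n u) opp_block_mx add_block_mx !sub0r.
Qed.

Lemma max_root (p : {poly C}) s : p != 0 -> root p s -> s \is Num.real ->
  exists s0, [/\ s0 \is Num.real, root p s0, s <= s0 &
    forall z, root p z -> z \is Num.real -> z <= s0].
Proof.
move=> p0 rs sr.
have [r hr] := closed_field_poly_normal p.
have lc0 : lead_coef p != 0 by rewrite lead_coef_eq0.
have rootE z : root p z = (z \in r).
  by rewrite hr rootZ // root_prod_XsubC.
pose P := fun z : C => (z \is Num.real) && (s <= z).
have sin : s \in r by rewrite -rootE.
have Ps : P s by rewrite /P sr lexx.
have hre : {in r, forall z, P z -> z \is Num.real} by move=> z _ /andP[].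
have [m mr [Pm hm]] := @seq_max C r P (ex_intro2 _ _ s sin Ps) hre.
case/andP: Pm => mre sm.
exists m; split => //; first by rewrite rootE.
move=> z rz zr; have [sz|zs] := real_leP sr zr.
  by apply: hm; rewrite ?/P ?zr ?sz // -rootE.
exact: le_trans (ltW zs) sm.
Qed.

Lemma nonneg_drsub n (A : 'M[C]_(1 + n)) : nonnegmx A -> nonnegmx (drsubmx A).
Proof. by move=> h i j; rewrite !mxE; apply: h. Qed.
Lemma nonneg_ursub n (A : 'M[C]_(1 + n)) : nonnegmx A -> nonnegmx (ursubmx A).
Proof. by move=> h i j; rewrite !mxE; apply: h. Qed.
Lemma nonneg_dlsub n (A : 'M[C]_(1 + n)) : nonnegmx A -> nonnegmx (dlsubmx A).
Proof. by move=> h i j; rewrite !mxE; apply: h. Qed.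

Lemma bord_sub n (A : 'M[C]_(1 + n)) u : \det (u%:M - drsubmx A) != 0 ->
  \det (u%:M - A) = (u - ulsubmx A 0 0) * \det (u%:M - drsubmx A)
     - (ursubmx A *m \adj (u%:M - drsubmx A) *m dlsubmx A) 0 0.
Proof.
move=> h; rewrite blocks_sub bord; rewrite ?block_mxKdr //.
rewrite block_mxKul block_mxKur block_mxKdl mulmxN !mulNmx opprK.
by congr (_ * _ - _); rewrite !mxE eqxx mulr1n.
Qed.

Lemma mon n (IH : forall (A : 'M[C]_n) t, nonnegmx A -> nosing A t -> Lprop A t)
  (A : 'M[C]_(1 + n)) t : nonnegmx A -> nosing A t -> nosing (drsubmx A) t.
Proof.
move=> A0 [tr hA]; split => // s sr ts; apply/negP => /eqP ds.
set A' := drsubmx A.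
have A'0 : nonnegmx A' by apply: nonneg_drsub.
set p' := char_poly A'.
have rs : root p' s by rewrite /root char_poly_horner ds.
have p'0 : p' != 0 by apply: monic_neq0; apply: char_poly_monic.
have [s0 [s0r rs0 ss0 hmax]] := max_root p'0 rs sr.
have nsu u : u \is Num.real -> s0 < u -> nosing A' u.
  move=> ur su; split => // w wr uw; apply/negP => /eqP dw.
  have rw : root p' w by rewrite /root char_poly_horner dw.
  have := le_lt_trans (hmax w rw wr) (lt_le_trans su uw).
  by rewrite ltxx.
have adju u : u \is Num.real -> s0 < u -> nonnegmx (\adj (u%:M - A')).
  move=> ur su; apply: adj_nonneg; first exact: IH (nsu u ur su).
  exact: ltW (nosing_pos A'0 (nsu u ur su)).
have ns0 : nosing A s0.
  split => // u ur su; apply: hA => //; exact: le_trans ts (le_trans ss0 su).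
have pos0 := nosing_pos A0 ns0.
set a := ulsubmx A; set b := ursubmx A; set c := dlsubmx A.
pose Phi := char_poly_mx A'.
pose Q := char_poly A - (('X - (a 0 0)%:P) * p' -
   \sum_j (\sum_i (b 0 i)%:P * \adj Phi i j) * (c j 0)%:P).
have QE u : Q.[u] = \det (u%:M - A) - ((u - a 0 0) * p'.[u]
    - (b *m \adj (u%:M - A') *m c) 0 0).
  rewrite /Q !(hornerD, hornerN, hornerM) hornerX hornerC char_poly_horner.
  suff -> : (\sum_j (\sum_i (b 0 i)%:P * \adj Phi i j) * (c j 0)%:P).[u] =
     (b *m \adj (u%:M - A') *m c) 0 0 by [].
  rewrite horner_sum mxE; apply: eq_bigr => j _.
  rewrite hornerM hornerC horner_sum; congr (_ * _); rewrite mxE; apply: eq_bigr => i _.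
  by rewrite hornerM hornerC adj_horner.
have Q0 : Q.[s0] = 0.
  apply: cont_eq0 => // u ur su _.
  have pu := nosing_pos A'0 (nsu u ur su).
  rewrite QE char_poly_horner -bord_sub ?subrr //.
  by rewrite lt0r in pu; case/andP: pu.
have adj0 : nonnegmx (\adj (s0%:M - A')).
  move=> i j; rewrite -adj_horner; apply: cont_ge0 => // u ur su _.
  by rewrite adj_horner; apply: adju.
move: Q0; rewrite QE (eqP rs0) mulr0 sub0r opprK => /eqP.
rewrite addr_eq0 => /eqP dE.
have : 0 <= (b *m \adj (s0%:M - A') *m c) 0 0.
  apply: nonneg_mul; last exact: nonneg_dlsub.
  by apply: nonneg_mul => //; exact: nonneg_ursub.
by rewrite -oppr_le0 -dE lt_geF.
Qed.

End PF3.


Section PF4.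
Variable C : numClosedFieldType.

Lemma lstep n (IH : forall (A : 'M[C]_n) t, nonnegmx A -> nosing A t -> Lprop A t)
  (A : 'M[C]_(1 + n)) t : nonnegmx A -> nosing A t -> Lprop A t.
Proof.
move=> A0 nA p x hy.
have nA' := mon IH A0 nA.
set A' := drsubmx A.
have A'0 : nonnegmx A' by apply: nonneg_drsub.
have L' := IH _ _ A'0 nA'.
have D'pos := nosing_pos A'0 nA'.
have D'0 : \det (t%:M - A') != 0 by rewrite gt_eqF.
have adj0 := adj_nonneg L' (ltW D'pos).
have Dpos := nosing_pos A0 nA.
have bt := bord_sub D'0.
set a := ulsubmx A; set b := ursubmx A; set c := dlsubmx A.
set D' := \det (t%:M - A'); set Adj := \adj (t%:M - A').
set B' := t%:M - A'.
fold a b c A' D' Adj in bt.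
set x0 := usubmx x; set x1 := dsubmx x.
set y := (t%:M - A) *m x.
have yE : y = col_mx ((t%:M - a) *m x0 - b *m x1) (- (c *m x0) + B' *m x1).
  rewrite /y blocks_sub -[x in _ *m x]vsubmxK mul_block_col.
  by rewrite !mulNmx.
set y0 := usubmx y; set y1 := dsubmx y.
have y0E : y0 = (t%:M - a) *m x0 - b *m x1 by rewrite /y0 yE col_mxKu.
have y1E : y1 = - (c *m x0) + B' *m x1 by rewrite /y1 yE col_mxKd.
have y0n : nonnegmx y0 by move=> i j; rewrite mxE; apply: hy.
have y1n : nonnegmx y1 by move=> i j; rewrite mxE; apply: hy.
have E1 : D' *: x1 = Adj *m (y1 + c *m x0).
  rewrite y1E addrAC addNr add0r mulmxA mul_adj_mx mul_scalar_mx //.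
have E2 : \det (t%:M - A) *: x0 = D' *: y0 + b *m Adj *m y1.
  have -> : b *m Adj *m y1 = b *m (Adj *m (y1 + c *m x0)) - (b *m Adj *m c) *m x0.
    by rewrite !mulmxDr !mulmxA addrK.
  rewrite -E1 y0E scalerBr -scalemxAr addrA subrK.
  rewrite [b *m Adj *m c]mx11_scalar mul_scalar_mx.
  rewrite [t%:M - a]mx11_scalar mul_scalar_mx scalerA -scalerBl bt.
  by rewrite [(t%:M - a) 0 0]mxE [t%:M 0 0]mxE [(- a) 0 0]mxE eqxx mulr1n [D' * _]mulrC.
have x0n : nonnegmx x0.
  move=> i j.
  have : 0 <= (\det (t%:M - A) *: x0) i j.
    rewrite E2; apply: nonneg_add; first exact: nonneg_scale (ltW D'pos) y0n.
    apply: nonneg_mul => //; apply: nonneg_mul => //; exact: nonneg_ursub.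
  by rewrite mxE pmulr_rge0.
have x1n : nonnegmx x1.
  move=> i j.
  have : 0 <= (D' *: x1) i j.
    rewrite E1; apply: nonneg_mul => //; apply: nonneg_add => //.
    by apply: nonneg_mul => //; exact: nonneg_dlsub.
  by rewrite mxE pmulr_rge0.
move=> i j; rewrite -[x]vsubmxK mxE; case: splitP => k _.
  exact: x0n.
exact: x1n.
Qed.

Lemma Lthm n (A : 'M[C]_n) t : nonnegmx A -> nosing A t -> Lprop A t.
Proof.
elim: n A t => [|n IH] A t A0 nA.
  by move=> p x _ [].
exact: (@lstep n IH A t A0 nA).
Qed.

End PF4.


Section Spec.
Variable C : numClosedFieldType.

Definition cj m n (x : 'M[C]_(m, n)) : 'M[C]_(n, m) := map_mx conjC (x^T).

Lemma cjM m n p (x : 'M[C]_(m, n)) (y : 'M[C]_(n, p)) : cj (x *m y) = cj y *m cj x.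
Proof. by rewrite /cj trmx_mul map_mxM. Qed.

Lemma spec_facts n (M : 'M[C]_n) mu : M \is normalmx ->
  (forall l, eigenvalue M l -> mu <= l) -> forall x : 'cV[C]_n,
  0 <= (cj x *m (M - mu%:M) *m x) 0 0 /\
  ((cj x *m (M - mu%:M) *m x) 0 0 = 0 -> (M - mu%:M) *m x = 0).
Proof.
move=> /orthomx_spectralP hM hmin x.
set P := spectralmx M in hM; set sp := spectral_diag M in hM.
have Pu : P \is unitarymx by apply: spectral_unitarymx.
have Pinv : invmx P = cj P by rewrite invmx_unitary.
have PU : P \in unitmx by apply: spectral_unit.
have PP : P *m cj P = 1%:M by apply/unitarymxP.
have PP' : cj P *m P = 1%:M by rewrite -Pinv mulVmx.
set E := diag_mx (\row_k (sp 0 k - mu)).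
have KE : M - mu%:M = cj P *m E *m P.
  have -> : E = diag_mx sp - mu%:M.
    by apply/matrixP => i j; rewrite !mxE mulrnBl.
  by rewrite mulmxBr mulmxBl -Pinv -hM mul_mx_scalar -scalemxAl mulVmx // scalemx1.
have eig k : eigenvalue M (sp 0 k).
  apply/eigenvalueP; exists (row k P).
    have PM : P *m M = diag_mx sp *m P.
      transitivity (P *m (invmx P *m diag_mx sp *m P)); first by congr (_ *m _).
      by rewrite !mulmxA mulmxV // mul1mx.
    by rewrite -row_mul PM row_mul row_diag_mx -scalemxAl -rowE.
  apply/eqP => /(congr1 (mulmx^~ (cj P))); rewrite -row_mul PP mul0mx.
  move/rowP => /(_ k); rewrite !mxE eqxx /=.
  by move/eqP; rewrite oner_eq0.
set y := P *m x.
have form : (cj x *m (M - mu%:M) *m x) 0 0 =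
    \sum_k (sp 0 k - mu) * (conjC (y k 0) * y k 0).
  have -> : cj x *m (M - mu%:M) *m x = cj y *m E *m y.
    by rewrite KE /y cjM !mulmxA.
  rewrite mxE; apply: eq_bigr => k _; rewrite mxE.
  rewrite (bigD1 k) //= big1 ?addr0.
    by rewrite /cj !mxE eqxx mulr1n mulrCA mulrA.
  by move=> j /negbTE jk; rewrite !mxE jk mulr0n mulr0.
have t0 k : 0 <= (sp 0 k - mu) * (conjC (y k 0) * y k 0).
  by rewrite mulr_ge0 ?subr_ge0 ?hmin // mulrC mul_conjC_ge0.
split; first by rewrite form sumr_ge0.
rewrite form => /psumr_eq0P h0.
have Ey : E *m y = 0.
  have Eij i j : E i j = (sp 0 i - mu) *+ (i == j) by rewrite !mxE.
  apply/matrixP => i j; rewrite ord1 [in RHS]mxE mxE (bigD1 i) //= big1 ?addr0.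
    rewrite Eij eqxx mulr1n.
    have := h0 (fun i _ => t0 i) i isT; move/eqP; rewrite mulf_eq0 => /orP [/eqP -> |]; first by rewrite mul0r.
    by rewrite mulrC mul_conjC_eq0 => /eqP ->; rewrite mulr0.
  by move=> k /negbTE ki; rewrite Eij eq_sym ki mulr0n mul0r.
by rewrite KE -!mulmxA -/y Ey mulmx0.
Qed.

End Spec.


Section Main1.
Variable C : numClosedFieldType.

Lemma real_sqr_ge0 (x : C) : x \is Num.real -> 0 <= x ^+ 2.
Proof. by move=> xr; rewrite -real_normK // exprn_ge0. Qed.

Lemma cs_real n (a b : 'I_n -> C) : (forall i, a i \is Num.real) ->
  (forall i, b i \is Num.real) ->
  (\sum_i a i * b i) ^+ 2 <= (\sum_i a i ^+ 2) * (\sum_i b i ^+ 2).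
Proof.
move=> ar br.
pose f j k := a j ^+ 2 * b k ^+ 2 - a j * b j * (a k * b k).
have E : (\sum_i a i ^+ 2) * (\sum_i b i ^+ 2) - (\sum_i a i * b i) ^+ 2 =
    \sum_j \sum_k f j k.
  rewrite expr2 mulr_suml [X in _ - X]mulr_suml -sumrB; apply: eq_bigr => j _.
  by rewrite !mulr_sumr -sumrB.
have E2 : \sum_j \sum_k f j k = \sum_j \sum_k f k j by rewrite exchange_big.
have S2 : 0 <= (\sum_j \sum_k f j k) *+ 2.
  rewrite mulr2n {2}E2 -big_split /=; apply: sumr_ge0 => j _.
  rewrite -big_split /=; apply: sumr_ge0 => k _.
  have -> : f j k + f k j = (a j * b k - a k * b j) ^+ 2 by rewrite /f; ring.
  by apply: real_sqr_ge0; rewrite rpredB ?rpredM.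
rewrite -subr_ge0 E; move: S2; rewrite -mulr_natr pmulr_lge0 //.
Qed.

Lemma cs_cplx n (e : 'I_n -> C) (z : 'I_n -> C) : (forall i, e i \is Num.real) ->
  `|\sum_j e j * z j| ^+ 2 <= (\sum_j e j ^+ 2) * (\sum_j `|z j| ^+ 2).
Proof.
move=> er.
apply: le_trans (_ : (\sum_j `|e j| * `|z j|) ^+ 2 <= _).
  apply: lerXn2r; rewrite ?nnegrE //.
    by apply: sumr_ge0 => j _; rewrite mulr_ge0.
  by apply: le_trans (ler_norm_sum _ _ _) _; apply: ler_sum => j _; rewrite normrM.
have -> : \sum_j e j ^+ 2 = \sum_j `|e j| ^+ 2 by apply: eq_bigr => j _; rewrite real_normK.
by apply: cs_real => j; apply: normr_real.
Qed.

Lemma keyG d (A : 'M[C]_d) (z : 'cV[C]_d) (l : C) : Lprop A 1 -> nonnegmx A ->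
  1 <= `|l| -> (1%:M - A) \in unitmx ->
  forall i, `|z i 0| <= (invmx (1%:M - A) *m map_mx normr ((l%:M - A) *m z)) i 0.
Proof.
move=> LA A0 l1 Bu.
set g := map_mx normr ((l%:M - A) *m z).
set h := invmx (1%:M - A) *m g.
have Bh : (1%:M - A) *m h = g by rewrite /h mulmxA mulmxV ?mul1mx.
have : nonnegmx (h - map_mx normr z).
  apply: LA => i j; rewrite mulmxBr Bh ord1.
  have gi : g i 0 = `|l * z i 0 - \sum_j0 A i j0 * z j0 0|.
    by rewrite /g mxE mulmxBl mul_scalar_mx !mxE.
  have hz : ((1%:M - A) *m map_mx normr z) i 0 = `|z i 0| - \sum_j0 A i j0 * `|z j0 0|.
    rewrite mulmxBl mul1mx !mxE; congr (_ - _); apply: eq_bigr => j0 _; by rewrite mxE.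
  rewrite mxE; have -> : (- ((1%:M - A) *m map_mx normr z)) i 0 = - ((1%:M - A) *m map_mx normr z) i 0 by rewrite mxE.
  rewrite gi hz.
  rewrite subr_ge0 lerBlDr.
  apply: le_trans (_ : `|l * z i 0| - `|\sum_j0 A i j0 * z j0 0| + \sum_j0 A i j0 * `|z j0 0| <= _).
    rewrite normrM -addrA -[X in X <= _]addr0; apply: lerD.
      by rewrite ler_peMl // normr_ge0.
    rewrite addrC subr_ge0; apply: le_trans (ler_norm_sum _ _ _) _.
    apply: ler_sum => j0 _; rewrite normrM ger0_norm //.
  rewrite lerD2r; exact: lerB_dist.
by move=> H i; have := H i 0; rewrite !mxE subr_ge0.
Qed.

End Main1.


Section Main2.
Variable C : numClosedFieldType.

Lemma char_poly_tr n (X : 'M[C]_n) : char_poly X^T = char_poly X.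
Proof.
rewrite /char_poly -det_tr; congr (\det _).
by apply/matrixP => i j; rewrite !mxE eq_sym.
Qed.

Lemma eig_col n (X : 'M[C]_n) l : eigenvalue X l ->
  exists2 z : 'cV[C]_n, z != 0 & X *m z = l *: z.
Proof.
rewrite eigenvalue_root_char -char_poly_tr -eigenvalue_root_char.
move=> /eigenvalueP [v hv v0]; exists v^T.
  by apply: contra_neq v0 => h; rewrite -[v]trmxK h trmx0.
by rewrite -[X]trmxK -trmx_mul hv linearZ.
Qed.

Lemma col_eig n (X : 'M[C]_n) l (z : 'cV[C]_n) : z != 0 -> X *m z = l *: z ->
  eigenvalue X l.
Proof.
move=> z0 hz; rewrite eigenvalue_root_char -char_poly_tr -eigenvalue_root_char.
apply/eigenvalueP; exists z^T.
  by rewrite -trmx_mul hz linearZ.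
by apply: contra_neq z0 => h; rewrite -[z]trmxK h trmx0.
Qed.

Definition nrm n (y : 'cV[C]_n) := \sum_i `|y i 0| ^+ 2.

Lemma nrm_ge0 n (y : 'cV[C]_n) : 0 <= nrm y.
Proof. by apply: sumr_ge0 => i _; rewrite exprn_ge0. Qed.

Lemma nrm_gt0 n (y : 'cV[C]_n) : y != 0 -> 0 < nrm y.
Proof.
move=> y0; have [i yi] : exists i, y i 0 != 0.
  apply/existsP; apply: contraR y0 => /existsPn h; apply/eqP/matrixP => i j.
  by rewrite ord1 mxE; move: (h i); rewrite negbK => /eqP.
rewrite /nrm (bigD1 i) //= ltr_pwDl ?exprn_gt0 ?normr_gt0 //.
by apply: sumr_ge0 => k _; rewrite exprn_ge0.
Qed.

Lemma cjmx_nrm n (y : 'cV[C]_n) : (cj y *m y) 0 0 = nrm y.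
Proof. by rewrite mxE; apply: eq_bigr => i _; rewrite !mxE normCKC. Qed.

Lemma nrm_le n (y z : 'cV[C]_n) : (forall i, `|y i 0| <= `|z i 0|) -> nrm y <= nrm z.
Proof. by move=> h; apply: ler_sum => i _; rewrite lerXn2r ?nnegrE. Qed.

Lemma nrm_real n (y : 'cV[C]_n) : (forall i, y i 0 \is Num.real) ->
  nrm y = \sum_i y i 0 ^+ 2.
Proof. by move=> h; apply: eq_bigr => i _; rewrite real_normK. Qed.

End Main2.


Section Main3.
Variable C : numClosedFieldType.

Lemma nosing_of_rho d (A : 'M[C]_d) : spec_rad_lt A 1 -> nosing A 1.
Proof.
move=> hr; split; first exact: real1.
move=> u ur u1; apply/negP => /eqP du.
have : eigenvalue A u by rewrite eigenvalue_root_char /root char_poly_horner du.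
move/hr; rewrite ger0_norm ?(le_trans ler01 u1) // => hu.
by have := lt_le_trans hu u1; rewrite ltxx.
Qed.

Lemma nosing_tr d (A : 'M[C]_d) t : nosing A t -> nosing A^T t.
Proof.
move=> [tr h]; split => // u ur tu.
have -> : u%:M - A^T = (u%:M - A)^T by rewrite linearB /= tr_scalar_mx.
by rewrite det_tr h.
Qed.

Lemma nonneg_tr m n (A : 'M[C]_(m, n)) : nonnegmx A -> nonnegmx A^T.
Proof. by move=> h i j; rewrite mxE. Qed.

Lemma real_of_nonneg m n (A : 'M[C]_(m, n)) i j : nonnegmx A -> A i j \is Num.real.
Proof. by move=> h; rewrite ger0_real. Qed.

End Main3.

End PFHelpers.
Import PFHelpers.

Import Order.TTheory GRing.Theory Num.Theory.
Local Open Scope ring_scope.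

Lemma entry_sub (C : numClosedFieldType) m n (P Q : 'M[C]_(m, n)) i j :
  (P - Q) i j = P i j - Q i j.
Proof. by rewrite !mxE. Qed.
Lemma entry_add (C : numClosedFieldType) m n (P Q : 'M[C]_(m, n)) i j :
  (P + Q) i j = P i j + Q i j.
Proof. by rewrite !mxE. Qed.
Lemma entry_scale (C : numClosedFieldType) m n (a : C) (P : 'M[C]_(m, n)) i j :
  (a *: P) i j = a * P i j.
Proof. by rewrite !mxE. Qed.

Theorem theorem1 (C : numClosedFieldType) (d : nat) (A : 'M[C]_d) (mu : C) :
  nonnegmx A ->
  spec_rad_lt A 1 ->
  smallest_eigenvalue ((1%:M - A^T) *m (1%:M - A)) mu ->
  0 < mu /\
  exists v : 'cV[C]_d,
    [/\ nonnegmx v, frob v = 1,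
        ((1%:M - A^T) *m (1%:M - A)) *m v = mu *: v &
        let r := sqrtC mu in
        let u := r^-1 *: ((1%:M - A) *m v) in
        let X := A + r *: (u *m v^T) in
        [/\ nonnegmx u, nonnegmx X, spec_rad_ge X 1, frob (X - A) = r &
            forall Y : 'M[C]_d, real_entries_mx Y -> spec_rad_ge Y 1 -> r <= frob (Y - A)]].
Proof.
move=> A0 hrho [hmu hmin].
set B := 1%:M - A.
have BT : 1%:M - A^T = B^T by rewrite /B linearB /= trmx1.
rewrite BT in hmu hmin *.
set M := B^T *m B.
have nA := nosing_of_rho hrho.
have nAT := nosing_tr nA.
have LA := Lthm A0 nA.
have LAT := Lthm (nonneg_tr A0) nAT.
have Bu : B \in unitmx by rewrite unitmxE unitfE gt_eqF // nosing_pos.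
have Bre i j : B i j \is Num.real.
  by rewrite !mxE rpredB ?rpredMn ?real1 ?real_of_nonneg.
have BtC : (B ^t*)%sesqui = B^T.
  by apply/matrixP => i j; rewrite !mxE; apply/CrealP; have := Bre j i; rewrite !mxE.
have cjB x : cj (B *m x) = cj x *m B^T.
  by rewrite cjM /cj BtC.
have Q1 x : (cj x *m M *m x) 0 0 = nrm (B *m x).
  by rewrite /M mulmxA -cjB -mulmxA cjmx_nrm.
have Mnormal : M \is normalmx.
  apply/normalmxP.
  have Bc : map_mx Num.conj B = B.
    by apply/matrixP => i j; rewrite !mxE; apply/CrealP; have := Bre i j; rewrite !mxE.
  have -> : (M ^t*)%sesqui = M.
    by rewrite /M trmx_mul trmxK map_mxM Bc BtC.
  by [].
have SF := spec_facts Mnormal hmin.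
have SFexp x : (cj x *m (M - mu%:M) *m x) 0 0 = nrm (B *m x) - mu * nrm x.
  by rewrite mulmxBr mulmxBl mul_mx_scalar -scalemxAl entry_sub entry_scale Q1 cjmx_nrm.
have Bx0 x : x != 0 -> B *m x != 0.
  move=> x0; apply: contra_neq x0 => h0.
  by rewrite -[x]mul1mx -(mulVmx Bu) -mulmxA h0 mulmx0.
have [z z0 Mz] := eig_col hmu.
have muz : mu * nrm z = nrm (B *m z).
  by rewrite -Q1 -mulmxA Mz -scalemxAr entry_scale cjmx_nrm.
have mu0 : 0 < mu.
  have hz := nrm_gt0 z0; have hBz := nrm_gt0 (Bx0 _ z z0).
  have -> : mu = nrm (B *m z) / nrm z by rewrite -muz mulfK // gt_eqF.
  by rewrite divr_gt0.
split => //.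
set h := invmx B *m map_mx Num.norm ((1%:M - A) *m z).
have hz : forall i, `|z i 0| <= h i 0.
  by apply: keyG; rewrite ?normr1.
have Bh : B *m h = map_mx Num.norm (B *m z) by rewrite /h mulmxA mulmxV ?mul1mx.
have h0 : nonnegmx h by move=> i j; rewrite ord1; exact: le_trans (normr_ge0 _) (hz i).
have nBh : nrm (B *m h) = nrm (B *m z).
  by rewrite Bh; apply: eq_bigr => i _; rewrite mxE normr_id.
have nzh : nrm z <= nrm h.
  by apply: nrm_le => i; rewrite (ger0_norm (h0 i 0)).
have Mh : M *m h = mu *: h.
  have [SF1 SF2] := SF h.
  have e0 : (cj h *m (M - mu%:M) *m h) 0 0 = 0.
    apply/eqP; rewrite eq_le SF1 andbT SFexp nBh -muz subr_le0.
    by rewrite ler_pM2l.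
  by move: (SF2 e0); rewrite mulmxBl mul_scalar_mx => /eqP; rewrite subr_eq0 => /eqP.
have hre i : h i 0 \is Num.real by apply: ger0_real; apply: h0.
have s0 : 0 < nrm h := lt_le_trans (nrm_gt0 z0) nzh.
set s := nrm h in s0.
have sE : s = \sum_i h i 0 ^+ 2 by apply: nrm_real.
set k := (sqrtC s)^-1.
have k0 : 0 < k by rewrite invr_gt0 sqrtC_gt0.
have k2 : k ^+ 2 * s = 1 by rewrite /k exprVn sqrtCK mulVf // gt_eqF.
set v := k *: h.
have v0 : nonnegmx v := nonneg_scale (ltW k0) h0.
have vre i : v i 0 \is Num.real by apply: ger0_real; apply: v0.
have vv : \sum_i v i 0 ^+ 2 = 1.
  rewrite -k2 sE mulr_sumr; apply: eq_bigr => i _; by rewrite entry_scale exprMn.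
have frobv : frob v = 1.
  rewrite /frob -[RHS]sqrtC1; congr sqrtC; rewrite -vv; apply: eq_bigr => i _.
  by rewrite big_ord1.
have Mv : M *m v = mu *: v by rewrite /v -scalemxAr Mh !scalerA mulrC.
have vn0 : v != 0.
  apply: contra_eq_neq vv => ->; rewrite big1; first by rewrite eq_sym oner_eq0.
  by move=> i _; rewrite mxE expr0n.
exists v; split => //.
move=> r uu X.
have r0 : 0 < r by rewrite /r sqrtC_gt0.
have rr : r ^+ 2 = mu by rewrite /r sqrtCK.
have vTv : v^T *m v = 1%:M.
  apply/matrixP => i j; rewrite !ord1 mxE [RHS]mxE eqxx mulr1n -vv.
  by apply: eq_bigr => k1 _; rewrite mxE expr2.
have BTu : (1%:M - A^T) *m uu = r *: v.
  rewrite BT /uu -scalemxAr mulmxA -/B -/M Mv scalerA -rr expr2.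
  by rewrite mulrA mulVf ?gt_eqF // mul1r.
have u0 : nonnegmx uu.
  apply: LAT; rewrite BTu; exact: nonneg_scale (ltW r0) v0.
have X0 : nonnegmx X.
  apply: nonneg_add => //; apply: nonneg_scale (ltW r0) _.
  by apply: nonneg_mul => //; apply: nonneg_tr.
have Xv : X *m v = v.
  rewrite /X mulmxDl -scalemxAl -mulmxA vTv mulmx1 /uu scalerA mulfV ?gt_eqF //.
  by rewrite scale1r -/B /B mulmxBl mul1mx addrC subrK.
split => //.
- exists 1; split; last by rewrite normr1.
  by apply: (col_eig vn0); rewrite scale1r.
- have -> : X - A = r *: (uu *m v^T) by rewrite /X addrAC subrr add0r.
  have ure i : uu i 0 \is Num.real by apply: ger0_real; apply: u0.
  have uu1 : \sum_i uu i 0 ^+ 2 = 1.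
    have : nrm (B *m v) = mu.
      by rewrite -Q1 -mulmxA Mv -scalemxAr entry_scale cjmx_nrm nrm_real // vv mulr1.
    rewrite nrm_real => [hB|i]; last first.
      by rewrite mxE rpred_sum // => j _; rewrite rpredM.
    rewrite -(mulVf (negbT (gt_eqF mu0))) -[X in _ * X]hB mulr_sumr.
    apply: eq_bigr => i _; rewrite /uu entry_scale exprMn -rr exprVn.
    by [].
  rewrite /frob -[RHS](sqrCK (ltW r0)); congr sqrtC.
  rewrite -[RHS]mulr1 -uu1 mulr_sumr; apply: eq_bigr => i _.
  rewrite -[X in _ = _ * X]mulr1 -vv !mulr_sumr; apply: eq_bigr => j _.
  rewrite entry_scale mxE big_ord1 mxE.
  by rewrite [v^T _ _]mxE !exprMn !mulrA.
move=> Y Yr [l [el l1]].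
have [w w0 Yw] := eig_col el.
set E := Y - A.
have Ew : (l%:M - A) *m w = E *m w by rewrite /E !mulmxBl mul_scalar_mx Yw.
set h2 := invmx B *m map_mx Num.norm ((l%:M - A) *m w).
have hw : forall i, `|w i 0| <= h2 i 0 by apply: keyG.
have Bh2 : B *m h2 = map_mx Num.norm (E *m w) by rewrite /h2 mulmxA mulmxV ?mul1mx ?Ew.
have h20 i : 0 <= h2 i 0 := le_trans (normr_ge0 _) (hw i).
have nwh : nrm w <= nrm h2 by apply: nrm_le => i; rewrite (ger0_norm (h20 i)).
have n1 : mu * nrm h2 <= nrm (E *m w).
  have [SF1 _] := SF h2; move: SF1; rewrite SFexp subr_ge0 Bh2.
  have -> : nrm (map_mx Num.norm (E *m w)) = nrm (E *m w).
    by apply: eq_bigr => i _; rewrite mxE normr_id.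
  by [].
have Ere i j : E i j \is Num.real.
  by rewrite /E entry_sub; apply: rpredB; [exact: Yr | exact: real_of_nonneg].
set F := \sum_i \sum_j E i j ^+ 2.
have n2 : nrm (E *m w) <= F * nrm w.
  rewrite /F mulr_suml; apply: ler_sum => i _; rewrite mxE.
  exact: cs_cplx (fun j => E i j) (fun j => w j 0) (Ere i).
have wpos := nrm_gt0 w0.
have muF : mu <= F.
  rewrite -(ler_pM2r wpos); apply: le_trans n2.
  apply: le_trans n1; rewrite ler_pM2l //.
rewrite /r /frob -/E -/F ler_sqrtC ?nnegrE ?(ltW mu0) //.
by apply: sumr_ge0 => i _; apply: sumr_ge0 => j _; apply: real_sqr_ge0.
Qed.
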